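(* Let $n,k,j,i$ be integers with $n \geq k > 0$, $0 \le j < n$, and $i \geq 1$. Then $$f_{(n,k) \setminus (j),i}(q) = q^{i^2} \left( \begin{bmatrix} n-j \\ i \end{bmatrix}_q \begin{bmatrix} k \\ i \end{bmatrix}_q - \begin{bmatrix} n+1 \\ i \end{bmatrix}_q \begin{bmatrix} k-j-1 \\ i \end{bmatrix}_q \right).$$
   Context: For partitions $\mu\subseteq\lambda$, the skew shape $\lambda\setminus\mu$ is the set of boxes of the Ferrers diagram of $\lambda$ (row $r$ has $\lambda_r$ left-justified boxes, rows numbered top to bottom) not in that of $\mu$. Thus $(n,k)\setminus(j)$ has a top row occupying columns $j+1,\dots,n$ and a bottom row occupying columns $1,\dots,k$. A standard Young tableau of shape $\lambda\setminus\mu$ with $N$ boxes is a filling with $1,\dots,N$, each used once, increasing left to right along rows and top to bottom down columns. Such a tableau $\tau$ has a descent at $m$ ($1\le m\le N-1$) if $m+1$ lies in a strictly lower row than $m$; $\mathrm{des}(\tau)$ is the number of descents and $\mathrm{maj}(\tau)$ is the sum of the descents. $f_{\lambda\setminus\mu,i}(q)=\sum_{\tau} q^{\mathrm{maj}(\tau)}$, summed over standard Young tableaux $\tau$ of shape $\lambda\setminus\mu$ with $\mathrm{des}(\tau)=i$ (for $\mu=\emptyset$ write $f_{\lambda,i}$). The $q$-binomial coefficient is $\begin{bmatrix} M \\ N \end{bmatrix}_q = \frac{(q)_M}{(q)_N(q)_{M-N}}$ with $(q)_m=(1-q)\cdots(1-q^m)$ when $0\le N\le M$ are integers, and $\begin{bmatrix}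 M \\ N \end{bmatrix}_q =0$ otherwise. *)

(* Defs.v *)
From HB Require Import structures.
From mathcomp Require Import all_boot all_order all_algebra.
Set Implicit Arguments. Unset Strict Implicit. Unset Printing Implicit Defensive.
Import Order.TTheory GRing.Theory Num.Theory.
Local Open Scope ring_scope.

(* Boxes of the skew shape (n,k)\(j):
   inl p (p : 'I_(n-j)) = top row, column j+1+p;
   inr c (c : 'I_k)     = bottom row, column c+1. *)
Definition skbox (n k j : nat) : finType := ('I_(n - j) + 'I_k)%type.

(* Number of boxes N = (n-j)+k. A filling stores entry (x+1) as x : 'I_N. *)
Definition skN (n k j : nat) : nat := ((n - j) + k)%N.

Definition filling (n k j : nat) := {ffun skbox n k j -> 'I_(skN n k j)}.

(* standard Young tableau: each of 1..N used exactly once (bijectivity,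
   equivalent to injectivity since the domain and codomain both have N
   elements), rows increasing left to right, columns increasing downwards. *)
Definition isSYT (n k j : nat) (T : filling n k j) : bool :=
  [&& injectiveb T,
      [forall p : 'I_(n - j), forall p' : 'I_(n - j),
         (p < p')%N ==> (T (inl p) < T (inl p'))%N],
      [forall c : 'I_k, forall c' : 'I_k,
         (c < c')%N ==> (T (inr c) < T (inr c'))%N] &
      [forall p : 'I_(n - j), forall c : 'I_k,
         (j + p == c)%N ==> (T (inl p) < T (inr c))%N]].

Definition in_top (n k j : nat) (T : filling n k j) (m : nat) : bool :=
  [exists p : 'I_(n - j), (T (inl p) : nat) == m.-1].
Definition in_bot (n k j : nat) (T : filling n k j) (m : nat) : bool :=
  [exists c : 'I_k, (T (inr c) : nat) == m.-1].

(* descents: 1 <= m <= N-1 with m+1 in a strictly lower row than m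
   (for two rows: m in the top row and m+1 in the bottom row) *)
Definition descents (n k j : nat) (T : filling n k j) : seq nat :=
  [seq m <- iota 1 (skN n k j).-1 | in_top T m && in_bot T m.+1].

Definition des (n k j : nat) (T : filling n k j) : nat := size (descents T).
Definition maj (n k j : nat) (T : filling n k j) : nat := sumn (descents T).

Definition f_skew (n k j i : nat) : {poly rat} :=
  \sum_(T : filling n k j | isSYT T && (des T == i)) 'X^(maj T).

Definition qpoch (m : nat) : {poly rat} := \prod_(1 <= t < m.+1) (1 - 'X^t).

Definition qbinom (M N : int) : {poly rat} :=
  if (0 <= N) && (N <= M) then
    qpoch `|M|%N %/ (qpoch `|N|%N * qpoch `|M - N|%N)
  else 0.

(* Main.v *)
Require Import Defs.
From HB Require Import structures.
From mathcomp Require Import all_boot all_order all_algebra.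
From mathcomp Require Import ring zify.
Import Order.TTheory GRing.Theory Num.Theory.
Local Open Scope ring_scope.
Fixpoint G (M N : nat) : {poly rat} :=
  match M, N with
  | _, 0 => 1
  | 0, _.+1 => 0
  | M'.+1, N'.+1 => G M' N'.+1 + 'X^(M' - N') * G M' N'
  end.

Lemma G_gt M N : (M < N)%N -> G M N = 0.
Proof.
elim: M N => [|M IH] [|N] //= H.
by rewrite !IH ?mulr0 ?addr0 // ltnW.
Qed.

Lemma G_diag M : G M M = 1.
Proof. by elim: M => //= M ->; rewrite G_gt // subnn expr0 mulr1 add0r. Qed.

Lemma qpoch_S M : qpoch M.+1 = qpoch M * (1 - 'X^(M.+1)).
Proof. by rewrite /qpoch big_nat_recr. Qed.

Lemma qpochG M N : (N <= M)%N -> qpoch M = G M N * (qpoch N * qpoch (M - N)).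
Proof.
elim: M N => [|M IH] [|N] //=.
- by move=> _; rewrite /qpoch big_geq // !mul1r.
- by move=> _; rewrite subn0 /qpoch [in X in _ = _ * (X * _)]big_geq // !mul1r.
rewrite ltnS subSS => HN.
case: (ltngtP N M) HN => // [HNM _|-> _]; last first.
  rewrite G_gt // add0r subnn expr0 mul1r G_diag.
  by rewrite /qpoch [in X in _ = _ * (_ * X)]big_geq // !mulr1 mul1r.
have h1 := IH N.+1 HNM.
have h2 := IH N (ltnW HNM).
have e : (M - N = (M - N.+1).+1)%N by rewrite subnSK.
have eX : 'X^(M.+1) = 'X^(M - N) * 'X^(N.+1) :> {poly rat}.
  by rewrite -exprD addnS subnK // ltnW.
set x := 'X^(M - N) : {poly rat}.
rewrite qpoch_S eX.
rewrite [qpoch N.+1]qpoch_S.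
have e2 : qpoch (M - N) = qpoch (M - N.+1) * (1 - x) by rewrite /x e qpoch_S -e.
rewrite e2.
set y := 'X^(N.+1) : {poly rat}.
set qM := qpoch M.
have -> : qM * (1 - x * y) = qM * (1-x) + x*(1-y)*qM by ring.
rewrite /qM {1}h1 h2 e2 qpoch_S -/y; ring.
Qed.

Lemma qpoch_neq0 M : qpoch M != 0.
Proof.
rewrite /qpoch prodf_seq_neq0; apply/allP => t; rewrite mem_index_iota => /andP[t1 _] /=.
apply/negP => /eqP/(congr1 (fun p : {poly rat} => p.[0])).
rewrite !hornerE expr0n eqn0Ngt t1 /= subr0 => /eqP.
by rewrite oner_eq0.
Qed.

Lemma qbinomG M N : qbinom M%:Z N%:Z = G M N.
Proof.
rewrite /qbinom lez_nat /=.
case: leqP => H.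
  rewrite subzn // !absz_nat (qpochG _ _ H) mulpK //.
  by rewrite mulf_neq0 // qpoch_neq0.
by rewrite G_gt.
Qed.
Definition wdesc (s : seq bool) : seq nat :=
  [seq m <- iota 1 (size s).-1 | nth false s m.-1 && ~~ nth false s m].
Definition good (j : nat) (s : seq bool) : bool :=
  all (fun t => count_mem false (take t s) <= count_mem true (take t s) + j)%N
      (iota 0 (size s).+1).
Fixpoint wl (n : nat) : seq (seq bool) :=
  if n is n'.+1 then map (rcons^~ true) (wl n') ++ map (rcons^~ false) (wl n')
  else [:: [::]].
Definition Pw (j a i : nat) (s : seq bool) :=
  (count_mem true s == a) && good j s && (size (wdesc s) == i).
Definition Sw (j a b i : nat) : {poly rat} :=
  \sum_(s <- wl (a + b) | Pw j a i s) 'X^(sumn (wdesc s)).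

Lemma iota_rcons m n : iota m n.+1 = rcons (iota m n) (m + n)%N.
Proof. by rewrite -addn1 iotaD cats1. Qed.

Lemma wdesc_rcons s x : wdesc (rcons s x) =
  wdesc s ++ (if last false s && ~~ x then [:: size s] else [::]).
Proof.
case: (posnP (size s)) => [/size0nil -> |]; first by rewrite /wdesc /=; case: x.
move=> sp; have [n sn] : exists n, size s = n.+1 by exists (size s).-1; rewrite prednK.
rewrite /wdesc size_rcons sn -[(n.+2).-1]/(n.+1) -[(n.+1).-1]/n iota_rcons filter_rcons add1n.
rewrite (nth_rcons false s x n.+1) sn ltnn eqxx.
rewrite nth_rcons sn ltnS leqnn -[n in nth _ s n]/((n.+1).-1) -sn nth_last.
have -> : [seq m <- iota 1 n | nth false (rcons s x) m.-1 &&
           ~~ nth false (rcons s x) m] =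
          [seq m <- iota 1 n | nth false s m.-1 && ~~ nth false s m].
  apply: eq_in_filter => m; rewrite mem_iota add1n => /andP[m1 m2].
  by rewrite !nth_rcons sn ltnS m2 (leq_trans (leq_pred m) m2).
by case: (last false s && ~~ x); rewrite ?cats1 ?cats0.
Qed.

Lemma good_rcons j s x : good j (rcons s x) =
  good j s && (count_mem false (rcons s x) <= count_mem true (rcons s x) + j)%N.
Proof.
rewrite /good size_rcons iota_rcons all_rcons add0n take_oversize ?size_rcons //.
rewrite andbC; congr (_ && _); apply: eq_in_all => t; rewrite mem_iota add0n ltnS.
by move=> /andP[_ ht]; rewrite -cats1 takel_cat.
Qed.

Lemma good_last j s : good j s -> (count_mem false s <= count_mem true s + j)%N.
Proof.
by move=> /allP /(_ (size s)); rewrite mem_iota add0n ltnS leqnn take_size => ->.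
Qed.

Lemma count_tf (s : seq bool) : (count_mem true s + count_mem false s)%N = size s.
Proof. by elim: s => //= -[] s IH; rewrite /= ?add0n ?add1n ?addnS ?addSn IH. Qed.

Lemma wl_size n s : s \in wl n -> size s = n.
Proof.
elim: n s => [|n IH] s /=; first by rewrite inE => /eqP ->.
by rewrite mem_cat => /orP[] /mapP[t /IH <- ->]; rewrite size_rcons.
Qed.

Lemma eq_big_in (r : seq (seq bool)) (P1 P2 : pred (seq bool))
    (F1 F2 : seq bool -> {poly rat}) :
  {in r, forall s, P1 s = P2 s} -> {in r, forall s, P2 s -> F1 s = F2 s} ->
  \sum_(s <- r | P1 s) F1 s = \sum_(s <- r | P2 s) F2 s.
Proof.
move=> HP HF; rewrite big_seq_cond [RHS]big_seq_cond.
apply: eq_big => s; first by case sr: (s \in r) => //=; rewrite HP.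
by move=> /andP[sr p1]; apply: HF => //; rewrite -HP.
Qed.

Lemma big_if (r : seq (seq bool)) (c : bool) (P : pred (seq bool))
    (F : seq bool -> {poly rat}) :
  \sum_(s <- r | c && P s) F s = if c then \sum_(s <- r | P s) F s else 0.
Proof. by case: c => //; rewrite big_pred0_eq. Qed.

Lemma big_wlS n (P : pred (seq bool)) (F : seq bool -> {poly rat}) :
  \sum_(s <- wl n.+1 | P s) F s =
  \sum_(s <- wl n | P (rcons s true)) F (rcons s true) +
  \sum_(s <- wl n | P (rcons s false)) F (rcons s false).
Proof. by rewrite /= big_cat !big_map. Qed.

Lemma count_rc (s : seq bool) x y :
  count_mem y (rcons s x) = (count_mem y s + (x == y))%N.
Proof. by rewrite -cats1 count_cat /= addn0. Qed.

Lemma Pw_rcons_t j a i s : Pw j a i (rcons s true) =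
  (count_mem true s + 1 == a)%N && (good j s && (count_mem false s <= count_mem true s + 1 + j)%N)
  && (size (wdesc s) == i).
Proof. by rewrite /Pw good_rcons !count_rc wdesc_rcons andbF cats0 addn0. Qed.

Lemma Pw_rcons_f j a i s : Pw j a i (rcons s false) =
  (count_mem true s == a)%N && (good j s && (count_mem false s + 1 <= count_mem true s + j)%N)
  && (size (wdesc s) + last false s == i)%N.
Proof.
rewrite /Pw good_rcons !count_rc wdesc_rcons andbT addn0 addn1 size_cat.
by case: (last false s); rewrite ?addn1 ?addn0.
Qed.

Lemma maj_rcons_t s : sumn (wdesc (rcons s true)) = sumn (wdesc s).
Proof. by rewrite wdesc_rcons andbF cats0. Qed.

Lemma maj_rcons_f s : sumn (wdesc (rcons s false)) =
  (sumn (wdesc s) + (if last false s then size s else 0))%N.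
Proof. by rewrite wdesc_rcons andbT sumn_cat; case: (last false s) => /=; rewrite ?addn0. Qed.

Definition gw (s : seq bool) : {poly rat} := 'X^(sumn (wdesc s)).
Definition TP (j a b i : nat) := \sum_(s <- wl (a + b).-1 | Pw j a i (rcons s true)) gw (rcons s true).
Definition FP (j a b i : nat) := \sum_(s <- wl (a + b).-1 | Pw j a i (rcons s false)) gw (rcons s false).

Lemma Sw_split j a b i : (0 < a + b)%N -> Sw j a b i = TP j a b i + FP j a b i.
Proof. by move=> H; rewrite /Sw -[in wl _](prednK H) big_wlS. Qed.

Lemma TP_eq j a b i : TP j a b i = if (0 < a)%N then Sw j a.-1 b i else 0.
Proof.
rewrite /TP /Sw; case: a => [|a] /=.
  by rewrite big_pred0 // => s; rewrite Pw_rcons_t addn1.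
apply: eq_big_in => s sw.
  rewrite Pw_rcons_t /Pw addn1 eqSS; case g: (good j s) => /=; last by rewrite !andbF.
  by rewrite (leq_trans (good_last _ _ g)) ?andbT // leq_add2r leq_addr.
by move=> _; rewrite /gw maj_rcons_t.
Qed.

Lemma FP_eq j a b i : (1 < a + b)%N -> (0 < b)%N ->
  FP j a b i = if (b <= a + j)%N then
    (if (0 < a)%N && (0 < i)%N then 'X^((a + b).-1) * Sw j a.-1 b.-1 i.-1 else 0)
    + FP j a b.-1 i else 0.
Proof.
move=> hab hb.
have [N hN] : exists N, (a + b = N.+2)%N by exists (a + b).-2; lia.
rewrite {1}/FP hN /= big_wlS.
have e2 : (a + b.-1).-1 = N by lia.
rewrite /FP e2.
rewrite (@eq_big_in _ _ (fun s => (b <= a + j)%N && (((0 < a)%N && (0 < i)%N) && Pw j a.-1 i.-1 s))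
   _ (fun s => 'X^((a + b).-1) * gw s)); first last.
- move=> s sw _; rewrite /gw maj_rcons_f last_rcons size_rcons (wl_size _ _ sw) maj_rcons_t.
  by rewrite hN /= exprD mulrC.
- move=> s sw; rewrite Pw_rcons_f good_rcons !count_rc wdesc_rcons andbF cats0
    last_rcons /Pw.
  have hs := wl_size _ _ sw; have ht := count_tf s; rewrite hs in ht.
  case g: (good j s); last by rewrite /= !andbF.
  have gl := good_last _ _ g.
  rewrite /= andbT; move: (size (wdesc s)) (count_mem true s) (count_mem false s) hs ht gl => d ct cf hs ht gl; clear g sw; lia.
rewrite [X in _ + X](@eq_big_in _ _ (fun s => (b <= a + j)%N && Pw j a i (rcons s false))
   _ (fun s => gw (rcons s false))); first last.
- by move=> s sw _; rewrite /gw [in LHS]maj_rcons_f last_rcons /= addn0.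
- move=> s sw; rewrite Pw_rcons_f [in RHS]/Pw !count_rc last_rcons addn0 /=.
  have hs := wl_size _ _ sw; have ht := count_tf s; rewrite hs in ht.
  case: eqP => ha; last by rewrite /= andbF.
  have -> : (count_mem false s + 1 + 1 <= count_mem true s + j)%N = (b <= a + j)%N.
  set cf := count_mem false s in ht *; set ct := count_mem true s in ht ha *; clearbody cf ct; lia.
  by case: (b <= a + j)%N; case: (good j (rcons s false)); rewrite /= ?addn0 ?andbF.
rewrite !big_if.
case: (b <= a + j)%N; last by rewrite addr0.
case: ifP => // /andP[ha hi].
have e3 : (a.-1 + b.-1 = N)%N by lia.
by rewrite /Sw e3 -big_distrr hN.
Qed.

Lemma G_n0 M : G M 0 = 1. Proof. by case: M. Qed.

Definition Pp (x y i : nat) : {poly rat} := 'X^(i ^ 2) * (G x i * G y i).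

Lemma Prec x y i : (0 < x)%N -> (0 < y)%N -> (0 < i)%N ->
  Pp x y i = Pp x.-1 y i + 'X^((x + y).-1) * Pp x.-1 y.-1 i.-1
             + Pp x y.-1 i - Pp x.-1 y.-1 i.
Proof.
case: x => // x; case: y => // y; case: i => // i _ _ _.
rewrite /Pp /=.
case: (leqP i x) => hx; last by rewrite (G_gt _ _ hx); ring.
case: (leqP i y) => hy; last by rewrite (G_gt _ _ hy); ring.
have h1 : 'X^(i.+1 ^ 2) = 'X^(i ^ 2) * 'X^i * 'X^i * 'X :> {poly rat}.
  by rewrite -!exprD -[X in _ * X]expr1 -exprD; congr (_ ^+ _); lia.
have h2 : 'X^(x + y.+1) = 'X^(x - i) * 'X^(y - i) * 'X^i * 'X^i * 'X :> {poly rat}.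
  by rewrite -!exprD -[X in _ * X]expr1 -exprD; congr (_ ^+ _); lia.
rewrite h1 h2; ring.
Qed.

Definition CF (j a b i : nat) : {poly rat} :=
  Pp a b i - (if (j < b)%N then Pp (a + j + 1) (b - j - 1) i else 0).

Lemma Pp_0r x i : (0 < i)%N -> Pp x 0 i = 0.
Proof. by case: i => // i _; rewrite /Pp /= !mulr0. Qed.

Lemma CF_rec j a b i : (0 < b)%N -> (b <= a + j)%N ->
  CF j a b i = (if (0 < a)%N then CF j a.-1 b i else 0) +
    ((if (0 < a)%N && (0 < i)%N then 'X^((a + b).-1) * CF j a.-1 b.-1 i.-1 else 0)
     + CF j a b.-1 i - (if (0 < a)%N then CF j a.-1 b.-1 i else 0)).
Proof.
move=> hb hab.
case: (posnP a) => [a0|ap].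
  subst a; rewrite /= add0r /CF.
  have -> : (j < b)%N = false by lia.
  have -> : (j < b.-1)%N = false by lia.
  rewrite /Pp !subr0; case: i => [|i] /=; first by rewrite !G_n0 add0r.
  by rewrite !mul0r !mulr0 add0r.
rewrite /=.
case: (posnP i) => [i0|ip].
  subst i; rewrite /= /CF /Pp !G_n0 /= !expr0 !mul1r.
  case: (ltnP j b) => hjb; case: (ltnP j b.-1) => hjb1 /=; try lia; ring.
rewrite /CF.
rewrite (Prec _ _ _ ap hb ip).
have ea : (a.-1 + j + 1 = a + j)%N by lia.
case: (ltnP j b.-1) => hjb1.
  have -> : (j < b)%N by lia.
  rewrite ea.
  have P2 := Prec (a + j + 1) (b - j - 1) i (ltac:(lia)) (ltac:(lia)) ip.
  have e1 : ((a + j + 1).-1 = a + j)%N by lia.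
  have e2 : ((b - j - 1).-1 = b.-1 - j - 1)%N by lia.
  have e3 : ((a + j + 1 + (b - j - 1)).-1 = (a + b).-1)%N by lia.
  rewrite e1 e2 e3 in P2; rewrite P2.
  ring.
case: (ltnP j b) => hjb.
  have eb : (b - j - 1 = 0)%N by lia.
  rewrite eb !Pp_0r //; ring.
ring.
Qed.

Lemma Sw00 j i : Sw j 0 0 i = if i == 0%N then 1 else 0.
Proof. by rewrite /Sw /= big_cons big_nil /Pw /good /wdesc /=; case: i => //=; rewrite addr0. Qed.

Lemma CF00 j i : CF j 0 0 i = if i == 0%N then 1 else 0.
Proof. by rewrite /CF /Pp subr0; case: i => [|i] /=; rewrite ?G_n0 ?mul0r ?mulr0 ?mulr1. Qed.

Lemma FP01 j i : (0 < j)%N -> FP j 0 1 i = if i == 0%N then 1 else 0.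
Proof.
move=> hj; rewrite /FP /= big_cons big_nil /Pw /good /wdesc /= add0n hj.
by case: i => //=; rewrite addr0.
Qed.

Lemma Sw_zero j a b i : (a + j < b)%N -> Sw j a b i = 0.
Proof.
move=> h; rewrite /Sw big_seq_cond big_pred0 // => s.
apply/negP => /andP[sw /andP[/andP[/eqP ct g] _]].
have := good_last _ _ g; have := count_tf s; rewrite (wl_size _ _ sw) ct; lia.
Qed.

Lemma FP_b0 j a i : (0 < a)%N -> FP j a 0 i = 0.
Proof.
move=> ha; rewrite /FP big_seq_cond big_pred0 // => s.
apply/negP => /andP[sw]; rewrite Pw_rcons_f => /andP[/andP[/eqP ct _] _].
have := count_tf s; rewrite (wl_size _ _ sw) ct; lia.
Qed.

Lemma Sw_CF j : forall n a b i, (a + b <= n)%N -> (b <= a + j + 1)%N ->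
  Sw j a b i = CF j a b i.
Proof.
elim => [|n IH] a b i hn hb.
  have [-> ->] : a = 0%N /\ b = 0%N by lia.
  by rewrite Sw00 CF00.
case: (ltnP (a + j) b) => hb'.
  rewrite Sw_zero // /CF.
  have -> : (j < b)%N by lia.
  have -> : b = (a + j + 1)%N by lia.
  have -> : (a + j + 1 - j - 1 = a)%N by lia.
  by rewrite /Pp; ring.
case: (posnP (a + b)) => hab.
  have [-> ->] : a = 0%N /\ b = 0%N by lia.
  by rewrite Sw00 CF00.
rewrite (Sw_split _ _ _ _ hab) TP_eq.
case: (posnP b) => hb0.
  subst b; have ha : (0 < a)%N by lia.
  rewrite FP_b0 // addr0 ha IH; [|lia|lia].
  rewrite /CF /= !subr0 /Pp; case: i => [|i]; first by rewrite !G_n0.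
  by rewrite (G_gt 0 i.+1) // !mulr0.
case: (ltnP 1 (a + b)) => hab2; last first.
  have [-> ->] : a = 0%N /\ b = 1%N by lia.
  rewrite /= add0r FP01; last by lia.
  rewrite (CF_rec j 0 1 i) //; last by lia.
  rewrite /= !add0r subr0 CF00.
  by case: (i == 0%N).
rewrite FP_eq // hb'.
have hs : (0 < a + b.-1)%N by lia.
have -> : FP j a b.-1 i = Sw j a b.-1 i - TP j a b.-1 i.
  by rewrite (Sw_split _ _ _ _ hs) addrAC subrr add0r.
rewrite TP_eq (CF_rec _ _ _ i) //.
rewrite (IH a b.-1 i); [|lia|lia].
case: (posnP a) => ha.
  by subst a; rewrite /= !add0r !subr0.
rewrite (IH a.-1 b i); [|lia|lia].
rewrite (IH a.-1 b.-1 i); [|lia|lia].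
case: (posnP i) => hi.
  by subst i; rewrite /= !addrA.
rewrite /= (IH a.-1 b.-1 i.-1); [|lia|lia].
by rewrite !addrA.
Qed.

Local Close Scope ring_scope.

Lemma count_swap (s1 s2 : seq nat) : uniq s1 -> uniq s2 ->
  count (mem s1) s2 = count (mem s2) s1.
Proof.
move=> u1 u2; rewrite -!size_filter; apply: perm_size.
apply: uniq_perm; rewrite ?filter_uniq // => x; rewrite !mem_filter.
by apply/andP/andP => -[h1 h2]; split.
Qed.

Lemma take_mkseq (T : Type) (f : nat -> T) t N : (t <= N)%N ->
  take t (mkseq f N) = mkseq f t.
Proof. by move=> h; rewrite /mkseq -map_take take_iota (minn_idPl h). Qed.

Lemma LA (L : seq nat) N t : uniq L -> all (fun x => x < N)%N L -> (t <= N)%N ->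
  count id (take t (mkseq (fun m => m \in L) N)) = count (fun x => x < t)%N L.
Proof.
move=> uL aL tN; rewrite take_mkseq // /mkseq count_map.
rewrite (@eq_count _ _ (mem L)) //.
rewrite count_swap ?iota_uniq //; apply: eq_count => x.
by have := mem_iota 0 t x; rewrite add0n.
Qed.

Lemma LB (L : seq nat) q t : sorted ltn L -> (q < size L)%N ->
  (nth 0 L q < t)%N = (q < count (fun x => x < t)%N L)%N.
Proof.
elim: L q => // x L IH q /= sL.
have sL' : sorted ltn L := path_sorted sL.
have allg : all (fun y => x < y)%N L := order_path_min ltn_trans sL.
case: (ltnP x t) => hx.
  case: q => [|q] //= hq.
  by rewrite IH.
have c0 : count (fun x0 => x0 < t)%N L = 0%N.
  apply/eqP; rewrite -leqn0 leqNgt -has_count; apply/hasPn => y yL.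
  by move/allP: allg => /(_ y yL) hy; rewrite -leqNgt (leq_trans hx (ltnW hy)).
rewrite c0; case: q => [|q] /= hq; first by rewrite ltnNge hx.
rewrite [RHS]ltnNge leq0n /=; apply/negbTE; rewrite -leqNgt.
exact: (leq_trans hx (ltnW (allP allg _ (mem_nth 0 hq)))).
Qed.

Lemma LA' (L : seq nat) t : uniq L ->
  count (mem L) (iota 0 t) = count (fun x => x < t)%N L.
Proof.
move=> uL; rewrite count_swap ?iota_uniq //; apply: eq_count => x.
by have := mem_iota 0 t x; rewrite add0n.
Qed.

Section Syt.
Variables n k j : nat.
Local Notation a := (n - j)%N.
Local Notation N := (skN n k j).

Definition LT (T : filling n k j) : seq nat := [seq val (T (inl p)) | p <- enum 'I_a].
Definition RT (T : filling n k j) : seq nat := [seq val (T (inr c)) | c <- enum 'I_k].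
Definition phi (T : filling n k j) : seq bool := mkseq (fun m => m \in LT T) N.

Lemma sorted_ord m : sorted (relpre val ltn) (enum 'I_m).
Proof. by rewrite -sorted_map val_enum_ord iota_ltn_sorted. Qed.

Section OneT.
Variable T : filling n k j.
Hypothesis HT : isSYT T.

Lemma T_inj : injective T.
Proof. by case/and4P: HT => /injectiveP. Qed.

Lemma T_top (p p' : 'I_a) : (p < p')%N -> (T (inl p) < T (inl p'))%N.
Proof. by case/and4P: HT => _ /forallP /(_ p) /forallP /(_ p') /implyP. Qed.

Lemma T_bot (c c' : 'I_k) : (c < c')%N -> (T (inr c) < T (inr c'))%N.
Proof. by case/and4P: HT => _ _ /forallP /(_ c) /forallP /(_ c') /implyP. Qed.

Lemma T_col (p : 'I_a) (c : 'I_k) : (j + p = c)%N -> (T (inl p) < T (inr c))%N.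
Proof.
move=> e; case/and4P: HT => _ _ _ /forallP /(_ p) /forallP /(_ c) /implyP; apply.
by rewrite e.
Qed.

Lemma size_LT : size (LT T) = a. Proof. by rewrite size_map size_enum_ord. Qed.
Lemma size_RT : size (RT T) = k. Proof. by rewrite size_map size_enum_ord. Qed.

Lemma nth_LT (p : 'I_a) : nth 0%N (LT T) p = T (inl p).
Proof. by rewrite (nth_map p) ?size_enum_ord // nth_ord_enum. Qed.
Lemma nth_RT (c : 'I_k) : nth 0%N (RT T) c = T (inr c).
Proof. by rewrite (nth_map c) ?size_enum_ord // nth_ord_enum. Qed.

Lemma sorted_LT : sorted ltn (LT T).
Proof.
apply: (homo_sorted (e := relpre val ltn)) (sorted_ord a) => x y /=; exact: T_top.
Qed.
Lemma sorted_RT : sorted ltn (RT T).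
Proof.
apply: (homo_sorted (e := relpre val ltn)) (sorted_ord k) => x y /=; exact: T_bot.
Qed.

Lemma uniq_LT : uniq (LT T). Proof. have := sorted_LT. exact: (@sorted_uniq nat ltn ltn_trans ltnn). Qed.
Lemma uniq_RT : uniq (RT T). Proof. have := sorted_RT. exact: (@sorted_uniq nat ltn ltn_trans ltnn). Qed.

Lemma all_LT : all (fun x => x < N)%N (LT T).
Proof. by apply/allP => x /mapP[p _ ->]; apply: ltn_ord. Qed.
Lemma all_RT : all (fun x => x < N)%N (RT T).
Proof. by apply/allP => x /mapP[p _ ->]; apply: ltn_ord. Qed.

Lemma LT_RT m : (m < N)%N -> (m \in LT T) = ~~ (m \in RT T).
Proof.
move=> hm.
have cardE : (#|'I_N| <= #|skbox n k j|)%N by rewrite card_sum !card_ord.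
have [g gK Kg] := inj_card_bij T_inj cardE.
set o := Ordinal hm.
have To : T (g o) = o by rewrite Kg.
case ex : (g o) To => [p|c] To.
  have -> : m \in LT T by apply/mapP; exists p; rewrite ?mem_enum // To.
  apply/esym/negP => /mapP[c _ ec].
  have : T (inr c) = T (inl p) by apply: val_inj; rewrite To -ec.
  by move/T_inj.
have -> : m \in RT T by apply/mapP; exists c; rewrite ?mem_enum // To.
rewrite /=; apply/negbTE/negP => /mapP[p _ ep].
have : T (inr c) = T (inl p) by apply: val_inj; rewrite To -ep.
by move/T_inj.
Qed.

Lemma in_topE m : in_top T m.+1 = (m \in LT T).
Proof.
apply/existsP/mapP => [[p /eqP e]|[p _ e]]; first by exists p; rewrite ?mem_enum.
by exists p; rewrite -e.
Qed.

Lemma in_botE m : in_bot T m.+1 = (m \in RT T).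
Proof.
apply/existsP/mapP => [[p /eqP e]|[p _ e]]; first by exists p; rewrite ?mem_enum.
by exists p; rewrite -e.
Qed.

Lemma desc_phi : descents T = wdesc (phi T).
Proof.
rewrite /descents /wdesc size_mkseq; apply: eq_in_filter => m.
rewrite mem_iota => /andP[m1 m2].
have mN : (m < N)%N by lia.
case: m m1 m2 mN => // m _ _ mN.
by rewrite in_topE in_botE !nth_mkseq ?(ltnW mN) //= (LT_RT m.+1) // negbK.
Qed.

Lemma count_phi : count_mem true (phi T) = a.
Proof.
rewrite /phi /mkseq count_map -size_LT.
rewrite (@eq_count _ _ (mem (LT T))); last by move=> x /=; case: (x \in LT T).
rewrite LA' ?uniq_LT //; rewrite -(count_predT (LT T)); apply: eq_in_count => x xL.
exact: (allP all_LT).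
Qed.

Lemma ct_phi t : (t <= N)%N ->
  count_mem true (take t (phi T)) = count (fun x => x < t)%N (LT T).
Proof.
move=> tN; rewrite /phi take_mkseq // /mkseq count_map -LA' ?uniq_LT //.
by apply: eq_count => x /=; case: (x \in LT T).
Qed.

Lemma cf_phi t : (t <= N)%N ->
  count_mem false (take t (phi T)) = count (fun x => x < t)%N (RT T).
Proof.
move=> tN; rewrite /phi take_mkseq // /mkseq count_map -LA' ?uniq_RT //.
apply: eq_in_count => x; rewrite mem_iota add0n /= => xt.
by rewrite LT_RT ?(leq_trans xt tN) //; case: (x \in RT T).
Qed.

Lemma good_phi : (k <= n)%N -> good j (phi T).
Proof.
move=> hkn; apply/allP => t; rewrite mem_iota size_mkseq add0n ltnS => ht.
rewrite ct_phi // cf_phi //.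
set be := count _ (RT T); set ta := count _ (LT T).
case: (leqP be j) => hb; first by rewrite (leq_trans hb) // leq_addl.
have hbk : (be <= k)%N by rewrite -size_RT count_size.
have hc0 : (be.-1 < k)%N by lia.
have hp0 : (be.-1 - j < a)%N by lia.
have := T_col (Ordinal hp0) (Ordinal hc0) (ltac:(rewrite /=; lia)).
rewrite -nth_LT -nth_RT /= => hlt.
have h1 : (nth 0 (RT T) be.-1 < t)%N.
  by rewrite LB ?sorted_RT ?size_RT //; lia.
have : (nth 0 (LT T) (be.-1 - j) < t)%N by apply: ltn_trans h1.
rewrite LB ?sorted_LT ?size_LT // -/ta; lia.
Qed.

End OneT.
Lemma phi_inj (T1 T2 : filling n k j) : isSYT T1 -> isSYT T2 -> phi T1 = phi T2 -> T1 = T2.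
Proof.
move=> H1 H2 e.
have eL : LT T1 = LT T2.
  apply: (@irr_sorted_eq nat ltn ltn_trans ltnn _ _ (sorted_LT T1 H1) (sorted_LT T2 H2)) => x.
  case: (ltnP x N) => hx.
    by have := congr1 (fun s => nth false s x) e; rewrite /phi !nth_mkseq.
  apply/idP/idP => /[dup] xL.
    by move/(allP (all_LT T1)); rewrite ltnNge hx.
  by move/(allP (all_LT T2)); rewrite ltnNge hx.
have eR : RT T1 = RT T2.
  apply: (@irr_sorted_eq nat ltn ltn_trans ltnn _ _ (sorted_RT T1 H1) (sorted_RT T2 H2)) => x.
  case: (ltnP x N) => hx.
    by rewrite -[x \in RT T1]negbK -(LT_RT T1 H1) // eL (LT_RT T2 H2) // negbK.
  apply/idP/idP => /[dup] xL.
    by move/(allP (all_RT T1)); rewrite ltnNge hx.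
  by move/(allP (all_RT T2)); rewrite ltnNge hx.
apply/ffunP => -[p|c]; apply: val_inj.
  by rewrite /= -(nth_LT T1) -(nth_LT T2) eL.
by rewrite /= -(nth_RT T1) -(nth_RT T2) eR.
Qed.

Lemma phi_surj (s : seq bool) : size s = N -> count_mem true s = a -> good j s ->
  exists T, isSYT T /\ phi T = s.
Proof.
move=> sN ca gs.
set L := [seq m <- iota 0 N | nth false s m].
set R := [seq m <- iota 0 N | ~~ nth false s m].
have sE : s = mkseq (nth false s) N by rewrite -sN mkseq_nth.
have sizeL : size L = a.
  rewrite size_filter -ca [in RHS]sE /mkseq count_map.
  by apply: eq_count => x /=; case: (nth false s x).
have sizeR : size R = k.
  have e1 : (size L + size R = N)%N.
    by rewrite !size_filter -[X in _ = X](size_iota 0 N) -(count_predC (nth false s)).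
  move: e1; rewrite sizeL /skN; lia.
have uL : uniq L by rewrite filter_uniq ?iota_uniq.
have uR : uniq R by rewrite filter_uniq ?iota_uniq.
have soL : sorted ltn L by rewrite sorted_filter ?iota_ltn_sorted //; apply: ltn_trans.
have soR : sorted ltn R by rewrite sorted_filter ?iota_ltn_sorted //; apply: ltn_trans.
have memL m : (m \in L) = (m < N)%N && nth false s m.
  by rewrite mem_filter mem_iota add0n andbC.
have memR m : (m \in R) = (m < N)%N && ~~ nth false s m.
  by rewrite mem_filter mem_iota add0n andbC.
have hL (p : 'I_a) : (nth 0 L p < N)%N.
  have hp : (p < size L)%N by rewrite sizeL.
  by have := mem_nth 0 hp; rewrite memL => /andP[].
have hR (c : 'I_k) : (nth 0 R c < N)%N.
  have hc : (c < size R)%N by rewrite sizeR.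
  by have := mem_nth 0 hc; rewrite memR => /andP[].
pose T : filling n k j := [ffun x => match x return 'I_N with
   | inl p => Ordinal (hL p) | inr c => Ordinal (hR c) end].
have TL (p : 'I_a) : (T (inl p) : nat) = nth 0 L p by rewrite ffunE.
have TR (c : 'I_k) : (T (inr c) : nat) = nth 0 R c by rewrite ffunE.
have inLR (p : 'I_a) (c : 'I_k) : nth 0 L p != nth 0 R c.
  apply/eqP => e.
  have hp : (p < size L)%N by rewrite sizeL.
  have hc : (c < size R)%N by rewrite sizeR.
  have := mem_nth 0 hp; have := mem_nth 0 hc; rewrite memL memR e.
  by move=> /andP[_ h1] /andP[_ h2]; rewrite h2 in h1.
have ctE t : (t <= N)%N -> count_mem true (take t s) = count (fun x => x < t)%N L.
  move=> tN; rewrite sE take_mkseq // /mkseq count_map -LA' //.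
  apply: eq_in_count => x; rewrite mem_iota add0n /= memL => xt.
  by rewrite (leq_trans xt tN); case: (nth false s x).
have cfE t : (t <= N)%N -> count_mem false (take t s) = count (fun x => x < t)%N R.
  move=> tN; rewrite sE take_mkseq // /mkseq count_map -LA' //.
  apply: eq_in_count => x; rewrite mem_iota add0n /= memR => xt.
  by rewrite (leq_trans xt tN); case: (nth false s x).
exists T; split.
  apply/and4P; split.
  - apply/injectiveP => -[p|c] [p'|c'] e; have := congr1 val e; rewrite /= ?TL ?TR.
    + move/eqP; rewrite nth_uniq ?sizeL // => /eqP/val_inj ->; done.
    + by move/eqP; rewrite (negbTE (inLR p c')).
    + by move/esym/eqP; rewrite (negbTE (inLR p' c)).
    + move/eqP; rewrite nth_uniq ?sizeR // => /eqP/val_inj ->; done.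
  - apply/forallP => p; apply/forallP => p'; apply/implyP => h; rewrite !TL.
    by apply: (sorted_ltn_nth ltn_trans 0 soL); rewrite ?inE ?sizeL.
  - apply/forallP => p; apply/forallP => p'; apply/implyP => h; rewrite !TR.
    by apply: (sorted_ltn_nth ltn_trans 0 soR); rewrite ?inE ?sizeR.
  - apply/forallP => p; apply/forallP => c; apply/implyP => /eqP hpc.
    rewrite TL TR ltnNge; apply/negP => hle.
    have hlt : (nth 0 R c < nth 0 L p)%N by rewrite ltn_neqAle hle eq_sym inLR.
    set t := (nth 0 R c).+1.
    have tN : (t <= N)%N by apply: hR.
    have := allP gs t; rewrite mem_iota add0n sN ltnS tN => /(_ isT).
    rewrite ctE // cfE //.
    have hc : (c < size R)%N by rewrite sizeR.
    have hp : (p < size L)%N by rewrite sizeL.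
    have h1 := LB R c t soR hc; rewrite ltnSn in h1.
    have h2 := LB L p t soL hp; rewrite ltnNge hlt /= in h2.
    lia.
have eLT : LT T = L.
  rewrite /LT; transitivity [seq nth 0 L (val p) | p <- enum 'I_a].
    by apply: eq_map => p; exact: TL p.
  rewrite (map_comp (nth 0 L) val) val_enum_ord -sizeL.
  exact: (mkseq_nth 0 L).
rewrite /phi eLT [RHS]sE; apply: eq_mkseq => m; rewrite memL.
by case: ltnP => //= hm; rewrite nth_default // sN.
Qed.

End Syt.

Local Open Scope ring_scope.

Lemma wl_uniq m : uniq (wl m).
Proof.
elim: m => //= m IH; rewrite cat_uniq !map_inj_uniq //.
- rewrite IH /= andbT; apply/hasPn => s /mapP[t _ ->]; apply/negP => /mapP[u _].
  by move/(congr1 (last false)); rewrite !last_rcons.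
- by move=> x y /rcons_inj [].
- by move=> x y /rcons_inj [].
Qed.

Lemma mem_wl s : s \in wl (size s).
Proof.
elim/last_ind: s => [|s x IH]; first by rewrite inE.
rewrite size_rcons /= mem_cat; case: x; [rewrite (map_f (rcons^~ true) IH) // |].
by rewrite (map_f (rcons^~ false) IH) orbT.
Qed.

Lemma f_skew_Sw n k j i : (k <= n)%N ->
  f_skew n k j i = Sw j (n - j) k i.
Proof.
move=> hkn.
rewrite /f_skew /Sw -big_filter -[RHS]big_filter.
set P := (fun T : filling n k j => isSYT T && (des T == i)).
set r := [seq T <- index_enum _ | P T].
rewrite (eq_big_seq (fun T => gw (phi n k j T))); last first.
  move=> T; rewrite mem_filter => /andP[/andP[HT _] _].
  by rewrite /maj /gw (desc_phi _ _ _ _ HT).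
rewrite -(big_map (phi n k j) xpredT gw).
apply: perm_big; apply: uniq_perm.
- rewrite map_inj_in_uniq ?filter_uniq ?index_enum_uniq //.
  move=> T1 T2; rewrite !mem_filter => /andP[/andP[H1 _] _] /andP[/andP[H2 _] _].
  exact: phi_inj H1 H2.
- by rewrite filter_uniq // wl_uniq.
move=> s; apply/mapP/idP.
  move=> [T]; rewrite mem_filter => /andP[/andP[HT /eqP dT] _] ->.
  rewrite mem_filter /Pw (count_phi _ _ _ _ HT) eqxx (good_phi _ _ _ _ HT hkn) /= -(desc_phi _ _ _ _ HT) -dT /des eqxx /=.
  by have := mem_wl (phi n k j T); rewrite /phi size_mkseq.
rewrite mem_filter => /andP[/andP[/andP[/eqP ca gs] /eqP ds] sw].
have sN := wl_size _ _ sw.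
have [T [HT eT]] := phi_surj _ _ _ _ sN ca gs.
exists T => //; rewrite mem_filter mem_index_enum andbT /= /P HT /=.
by rewrite /des (desc_phi _ _ _ _ HT) eT ds.
Qed.

Theorem mainTheorem2 (n k j i : nat) (hk : (0 < k)%N) (hkn : (k <= n)%N)
    (hj : (j < n)%N) (hi : (1 <= i)%N) :
  f_skew n k j i =
  'X^(i ^ 2) *
    (qbinom (n - j)%:Z i%:Z * qbinom k%:Z i%:Z
     - qbinom (n + 1)%:Z i%:Z * qbinom (k%:Z - j%:Z - 1) i%:Z).
Proof.
rewrite f_skew_Sw // (Sw_CF j (n - j + k)); [|lia|lia].
rewrite /CF /Pp !qbinomG.
have -> : (n - j + j + 1 = n + 1)%N by lia.
case: (ltnP j k) => hjk.
  have -> : k%:Z - j%:Z - 1 = (k - j - 1)%N%:Z by lia.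
  by rewrite qbinomG; ring.
have -> : qbinom (k%:Z - j%:Z - 1) i%:Z = 0.
  by rewrite /qbinom; case: ifP => // /andP[_ h]; lia.
by rewrite subr0 mulr0 subr0.
Qed.
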